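(* Let $\mathcal{S}$ be a sound and refutationally complete saturation system and let $\theta(x,y)$ be the formula $y+x=x\to y=0$. Then $\mathcal{S}+\mathrm{IND}^R_{\mathrm{PF}}(\mathrm{Open}(\mathcal{T}))$ refutes the clause set $\mathit{CNF}(\mathit{sk}^\exists(\mathcal{T}+\neg\forall x\,\theta(x,x)))$.
   Context: Linear arithmetic: language $\{0/0,s/1,p/1,+/2\}$; $\mathcal{T}$ is the theory with axioms (universally closed) $0\neq s(x)$, $p(0)=0$, $p(s(x))=x$, $x+0=x$, $x+s(y)=s(x+y)$. $\mathrm{Open}(\mathcal{T})$ is the set of quantifier-free formulas of this language. $\mathit{sk}^\exists$ is existential Skolemization with canonical Skolem symbols (a strong quantifier $QxA$ with free variables $\vec y$ is replaced by the term $\mathfrak{s}_{QxA}(\vec y)$, a new function symbol indexed by $QxA$); $\mathit{CNF}$ gives the clause set of the conjunctive normal form of universal sentences. $I_x\varphi=\forall\vec z(\varphi(0,\vec z)\wedge\forall x(\varphi(x,\vec z)\to\varphi(s(x),\vec z))\to\forall x\varphi(x,\vec z))$. Saturation systems: sets of rules $\mathcal{C}/\mathcal{D}$ ($\mathcal{C}$ clause set, $\mathcal{D}$ finite clause set), $+$ = union; a deduction from $\mathcal{C}_0$ is $\mathcal{D}_0=\mathcal{C}_0,\dots,\mathcal{D}_n$ with $\mathcal{D}_{i+1}=\mathcal{D}_i\cup\mathcal{B}_i$ for a rule $\mathcal{D}_i/\mathcal{B}_i$; a refutation has the empty clause in $\mathcal{D}_n$. Sound: any clause $C$ derivable from $\mathcal{C}_0$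 has $L(C)\subseteq L(\mathcal{C}_0)$ and $\mathcal{C}_0\models C$; refutationally complete: every inconsistent clause set has a refutation. $\mathrm{IND}^R_{\mathrm{PF}}(\Gamma)$ is the set of rules $\mathcal{C}/\mathit{CNF}(\mathit{sk}^\exists(I_x\varphi(x,\vec t)))$ for every clause set $\mathcal{C}$, every $\varphi(x,\vec z)\in\Gamma$ and every vector $\vec t$ of ground terms over the symbols occurring in $\mathcal{C}$. *)

(* Defs.v *)
From Stdlib Require Import List Arith Bool.
Import ListNotations.

(* Function symbols: the four symbols of linear arithmetic, an unbounded supply
   of further (named) function symbols, and the canonical Skolem symbols
   s_{QxA}, indexed by the quantified formula QxA itself.  Variables are de Bruijn
   indices. *)
Inductive fsym : Type :=
| FZero | FSucc | FPred | FPlus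
| FNamed (n : nat)
| FSk (A : form)
with term : Type :=
| Var (n : nat)
| App (f : fsym) (args : list term)
with form : Type :=
| FFalse | FTrue
| FEq (t u : term)
| FPr (p : nat) (args : list term)
| FNot (A : form)
| FAnd (A B : form)
| FOr (A B : form)
| FImp (A B : form)
| FAll (A : form)
| FEx (A : form).

Fixpoint tsubst (sg : nat -> term) (t : term) : term :=
  match t with
  | Var n => sg n
  | App f ts => App f (map (tsubst sg) ts)
  end.

Definition scons (t : term) (sg : nat -> term) : nat -> term :=
  fun i => match i with 0 => t | S j => sg j end.

Definition tshift (t : term) : term := tsubst (fun i => Var (S i)) t.

Definition up (sg : nat -> term) : nat -> term :=
  scons (Var 0) (fun i => tshift (sg i)).

Fixpoint fsubst (sg : nat -> term) (A : form) : form :=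
  match A with
  | FFalse => FFalse
  | FTrue => FTrue
  | FEq t u => FEq (tsubst sg t) (tsubst sg u)
  | FPr p ts => FPr p (map (tsubst sg) ts)
  | FNot B => FNot (fsubst sg B)
  | FAnd B C => FAnd (fsubst sg B) (fsubst sg C)
  | FOr B C => FOr (fsubst sg B) (fsubst sg C)
  | FImp B C => FImp (fsubst sg B) (fsubst sg C)
  | FAll B => FAll (fsubst (up sg) B)
  | FEx B => FEx (fsubst (up sg) B)
  end.

Fixpoint tfree (i : nat) (t : term) : bool :=
  match t with
  | Var n => n =? i
  | App _ ts => existsb (tfree i) ts
  end.

Fixpoint ffree (i : nat) (A : form) : bool :=
  match A with
  | FFalse | FTrue => false
  | FEq t u => tfree i t || tfree i u
  | FPr _ ts => existsb (tfree i) ts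
  | FNot B => ffree i B
  | FAnd B C | FOr B C | FImp B C => ffree i B || ffree i C
  | FAll B | FEx B => ffree (S i) B
  end.

Fixpoint tbound (t : term) : nat :=
  match t with
  | Var n => S n
  | App _ ts => fold_right (fun u m => Nat.max (tbound u) m) 0 ts
  end.

Fixpoint fbound (A : form) : nat :=
  match A with
  | FFalse | FTrue => 0
  | FEq t u => Nat.max (tbound t) (tbound u)
  | FPr _ ts => fold_right (fun u m => Nat.max (tbound u) m) 0 ts
  | FNot B => fbound B
  | FAnd B C | FOr B C | FImp B C => Nat.max (fbound B) (fbound C)
  | FAll B | FEx B => Nat.pred (fbound B)
  end.

Definition fv (A : form) : list nat := filter (fun i => ffree i A) (seq 0 (fbound A)).

Definition sk_term (QA : form) : term := App (FSk QA) (map Var (fv QA)).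

(* [sk pos sg A]: Skolemize A, occurring with polarity [pos], under the
   substitution [sg] of the outer replacements already performed. *)
Fixpoint sk (pos : bool) (sg : nat -> term) (A : form) : form :=
  match A with
  | FFalse => FFalse
  | FTrue => FTrue
  | FEq t u => FEq (tsubst sg t) (tsubst sg u)
  | FPr p ts => FPr p (map (tsubst sg) ts)
  | FNot B => FNot (sk (negb pos) sg B)
  | FAnd B C => FAnd (sk pos sg B) (sk pos sg C)
  | FOr B C => FOr (sk pos sg B) (sk pos sg C)
  | FImp B C => FImp (sk (negb pos) sg B) (sk pos sg C)
  | FAll B => if pos then FAll (sk pos (up sg) B)
              else sk pos (scons (sk_term (fsubst sg A)) sg) B
  | FEx B => if pos then sk pos (scons (sk_term (fsubst sg A)) sg) B
             else FEx (sk pos (up sg) B)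
  end.

Definition skE (A : form) : form := sk true Var A.

Inductive atom : Type :=
| AEq (t u : term)
| APr (p : nat) (args : list term).

Definition literal : Type := (bool * atom)%type.   (* true = positive *)
Definition clause : Type := list literal.
Definition clause_set : Type := clause -> Prop.

Inductive nform : Type :=
| NTop | NBot
| NLit (b : bool) (a : atom)
| NAnd (A B : nform)
| NOr (A B : nform)
| NAll (A : nform).

(* NNF of a formula whose quantifiers are all universal in effect
   (positive ∀, negative ∃), as is the case for the output of sk^∃.
   The two other quantifier cases never arise for such formulas. *)
Fixpoint nnf (pos : bool) (A : form) : nform :=
  match A with
  | FFalse => if pos then NBot else NTop
  | FTrue => if pos then NTop else NBot
  | FEq t u => NLit pos (AEq t u)
  | FPr p ts => NLit pos (APr p ts)
  | FNot B => nnf (negb pos) B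
  | FAnd B C => if pos then NAnd (nnf pos B) (nnf pos C) else NOr (nnf pos B) (nnf pos C)
  | FOr B C => if pos then NOr (nnf pos B) (nnf pos C) else NAnd (nnf pos B) (nnf pos C)
  | FImp B C => if pos then NOr (nnf false B) (nnf true C)
                else NAnd (nnf true B) (nnf false C)
  | FAll B => NAll (nnf pos B)
  | FEx B => NAll (nnf pos B)
  end.

Definition aren (xi : nat -> nat) (a : atom) : atom :=
  match a with
  | AEq t u => AEq (tsubst (fun i => Var (xi i)) t) (tsubst (fun i => Var (xi i)) u)
  | APr p ts => APr p (map (tsubst (fun i => Var (xi i))) ts)
  end.

Definition uplift (xi : nat -> nat) : nat -> nat :=
  fun i => match i with 0 => 0 | S j => S (xi j) end.

Fixpoint nren (xi : nat -> nat) (A : nform) : nform :=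
  match A with
  | NTop => NTop
  | NBot => NBot
  | NLit b a => NLit b (aren xi a)
  | NAnd B C => NAnd (nren xi B) (nren xi C)
  | NOr B C => NOr (nren xi B) (nren xi C)
  | NAll B => NAll (nren (uplift xi) B)
  end.

(* prenexing of a universal NNF: [pnf A = (k, M)] means A ≡ ∀^k M *)
Fixpoint pnf (A : nform) : nat * nform :=
  match A with
  | NAll B => let (k, M) := pnf B in (S k, M)
  | NAnd B C =>
      let (k1, M1) := pnf B in let (k2, M2) := pnf C in
      (k1 + k2, NAnd (nren (fun i => i + k2) M1)
                     (nren (fun i => if i <? k2 then i else i + k1) M2))
  | NOr B C =>
      let (k1, M1) := pnf B in let (k2, M2) := pnf C in
      (k1 + k2, NOr (nren (fun i => i + k2) M1)
                    (nren (fun i => if i <? k2 then i else i + k1) M2))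
  | _ => (0, A)
  end.

Fixpoint cnf_mat (M : nform) : list clause :=
  match M with
  | NTop => []
  | NBot => [[]]
  | NLit b a => [[(b, a)]]
  | NAnd A B => cnf_mat A ++ cnf_mat B
  | NOr A B => flat_map (fun c1 => map (fun c2 => c1 ++ c2) (cnf_mat B)) (cnf_mat A)
  | NAll A => cnf_mat A
  end.

(* clause set of the CNF of a universal sentence; the variables of the
   clauses are (implicitly universally quantified) free variables *)
Definition CNF (A : form) : list clause := cnf_mat (snd (pnf (nnf true A))).

Definition CNF_sk_set (G : form -> Prop) : clause_set :=
  fun c => exists A, G A /\ In c (CNF (skE A)).

Record structure : Type := {
  dom : Type;
  dom_inh : dom;
  fint : fsym -> list dom -> dom;
  pint : nat -> list dom -> Prop }.

Fixpoint teval (M : structure) (rho : nat -> dom M) (t : term) : dom M :=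
  match t with
  | Var n => rho n
  | App f ts => fint M f (map (teval M rho) ts)
  end.

Definition aeval (M : structure) (rho : nat -> dom M) (a : atom) : Prop :=
  match a with
  | AEq t u => teval M rho t = teval M rho u
  | APr p ts => pint M p (map (teval M rho) ts)
  end.

Definition lit_sat (M : structure) (rho : nat -> dom M) (l : literal) : Prop :=
  if fst l then aeval M rho (snd l) else ~ aeval M rho (snd l).

Definition clause_sat (M : structure) (rho : nat -> dom M) (c : clause) : Prop :=
  exists l, In l c /\ lit_sat M rho l.

Definition models (M : structure) (C : clause_set) : Prop :=
  forall c, C c -> forall rho : nat -> dom M, clause_sat M rho c.

Definition inconsistent (C : clause_set) : Prop := forall M, ~ models M C.

Definition entails (C0 : clause_set) (c : clause) : Prop :=
  forall M, models M C0 -> forall rho : nat -> dom M, clause_sat M rho c.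

Inductive symbol : Type := SFun (f : fsym) | SPred (p : nat).

Fixpoint sym_in_term (s : symbol) (t : term) : Prop :=
  match t with
  | Var _ => False
  | App f ts => s = SFun f \/
      (fix go (l : list term) : Prop :=
         match l with [] => False | u :: l' => sym_in_term s u \/ go l' end) ts
  end.

Definition sym_in_atom (s : symbol) (a : atom) : Prop :=
  match a with
  | AEq t u => sym_in_term s t \/ sym_in_term s u
  | APr p ts => s = SPred p \/ exists t, In t ts /\ sym_in_term s t
  end.

Definition sym_in_clause (s : symbol) (c : clause) : Prop :=
  exists l, In l c /\ sym_in_atom s (snd l).

Definition sym_in_set (s : symbol) (C : clause_set) : Prop :=
  exists c, C c /\ sym_in_clause s c.

Definition lang_sub (c : clause) (C0 : clause_set) : Prop :=
  forall s, sym_in_clause s c -> sym_in_set s C0.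

(* a set of rules C / D, with C a clause set and D a finite clause set *)
Definition sat_system : Type := clause_set -> list clause -> Prop.

Definition sys_plus (S1 S2 : sat_system) : sat_system :=
  fun C D => S1 C D \/ S2 C D.

Inductive deduction (S : sat_system) (C0 : clause_set) : clause_set -> Prop :=
| ded_base : deduction S C0 C0
| ded_step (D : clause_set) (B : list clause) :
    deduction S C0 D -> S D B -> deduction S C0 (fun c => D c \/ In c B).

Definition derivable (S : sat_system) (C0 : clause_set) (c : clause) : Prop :=
  exists D, deduction S C0 D /\ D c.

Definition refutes (S : sat_system) (C0 : clause_set) : Prop :=
  exists D, deduction S C0 D /\ D [].

Definition sound (S : sat_system) : Prop :=
  forall C0 c, derivable S C0 c -> lang_sub c C0 /\ entails C0 c.

Definition refut_complete (S : sat_system) : Prop :=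
  forall C, inconsistent C -> refutes S C.

Definition tzero : term := App FZero [].
Definition tsucc (t : term) : term := App FSucc [t].
Definition tpred (t : term) : term := App FPred [t].
Definition tplus (t u : term) : term := App FPlus [t; u].

Definition T_axioms : list form :=
  [ FAll (FNot (FEq tzero (tsucc (Var 0))));
    FEq (tpred tzero) tzero;
    FAll (FEq (tpred (tsucc (Var 0))) (Var 0));
    FAll (FEq (tplus (Var 0) tzero) (Var 0));
    FAll (FAll (FEq (tplus (Var 1) (tsucc (Var 0)))
                    (tsucc (tplus (Var 1) (Var 0))))) ].

Fixpoint LA_term (t : term) : Prop :=
  match t with
  | Var _ => True
  | App FZero [] => True
  | App FSucc [a] => LA_term a
  | App FPred [a] => LA_term a
  | App FPlus [a; b] => LA_term a /\ LA_term b
  | _ => False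
  end.

Fixpoint Open_T (A : form) : Prop :=
  match A with
  | FFalse | FTrue => True
  | FEq t u => LA_term t /\ LA_term u
  | FPr _ _ => False
  | FNot B => Open_T B
  | FAnd B C | FOr B C | FImp B C => Open_T B /\ Open_T C
  | FAll _ | FEx _ => False
  end.

(* I_x psi for a formula psi(x) whose only free variable is x = Var 0:
   psi(0) ∧ ∀x (psi(x) → psi(s x)) → ∀x psi(x)   (no parameters z left) *)
Definition ind_x (psi : form) : form :=
  FImp (FAnd (fsubst (scons tzero Var) psi)
             (FAll (FImp psi (fsubst (scons (tsucc (Var 0)) (fun i => Var (S i))) psi))))
       (FAll psi).

(* phi(x, t1..tk): x = Var 0, parameters z_j = Var (j+1) replaced by t_j *)
Definition inst_params (phi : form) (ts : list term) : form :=
  fsubst (scons (Var 0) (fun j => nth j ts (Var (S j)))) phi.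

Definition ground_over (C : clause_set) (t : term) : Prop :=
  (forall i, tfree i t = false) /\ (forall s, sym_in_term s t -> sym_in_set s C).

Definition IND_R_PF (G : form -> Prop) : sat_system :=
  fun C D => exists (phi : form) (ts : list term),
      G phi /\
      (forall i, ffree i phi = true -> i <= length ts) /\
      Forall (ground_over C) ts /\
      D = CNF (skE (ind_x (inst_params phi ts))).

(* theta(x, y) := y + x = x -> y = 0, with x = Var 0, y = Var 1 *)
Definition theta : form :=
  FImp (FEq (tplus (Var 1) (Var 0)) (Var 0)) (FEq (Var 1) tzero).

Definition all_theta_xx : form := FAll (fsubst (scons (Var 0) (scons (Var 0) Var)) theta).

Definition T_neg_theta : form -> Prop :=
  fun A => In A T_axioms \/ A = FNot all_theta_xx.

(* Main.v *)
Require Import Defs.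
From Stdlib Require Import List.
Import ListNotations.

Definition cT : term := Eval vm_compute in
  match CNF (skE (FNot all_theta_xx)) with
  | [(_, AEq t _)] :: _ => match t with App _ [u; _] => u | _ => t end
  | _ => tzero end.

Definition BI : list clause := CNF (skE (ind_x (inst_params theta [cT]))).

Definition dT : term := Eval vm_compute in
  match BI with
  | (_ :: (_, AEq (App _ [_; d]) _) :: _) :: _ => d
  | _ => tzero end.

Definition BI' : list clause :=
  let c := cT in let d := dT in let x := Var 0 in
  let A0 := (true, AEq (tplus c tzero) tzero) in
  let A1 := (false, AEq c tzero) in
  let B1 := [(false, AEq (tplus c d) d); (true, AEq c tzero)] in
  let B2 := [(true, AEq (tplus c (tsucc d)) (tsucc d))] in
  let B3 := [(false, AEq c tzero)] in
  let P := [(false, AEq (tplus c x) x); (true, AEq c tzero)] in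
  [A0 :: B1 ++ P; A0 :: B2 ++ P; A0 :: B3 ++ P;
   A1 :: B1 ++ P; A1 :: B2 ++ P; A1 :: B3 ++ P].

Lemma BI_eq : BI = BI'.
Proof. vm_compute. reflexivity. Qed.

Fixpoint csat (M : structure) (rho : nat -> dom M) (cl : clause) : Prop :=
  match cl with [] => False | l :: r => lit_sat M rho l \/ csat M rho r end.

Lemma clause_csat M rho cl : clause_sat M rho cl -> csat M rho cl.
Proof.
  intros [l [Hin Hl]]. induction cl as [|l' cl IH]; simpl in *; [easy|].
  destruct Hin as [<-|Hin]; auto.
Qed.

Definition C0 : clause_set := CNF_sk_set T_neg_theta.
Definition C1 : clause_set := fun c => C0 c \/ In c BI.

Lemma lift S D : deduction S C1 D -> deduction (sys_plus S (IND_R_PF Open_T)) C0 D.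
Proof.
  induction 1.
  - unfold C1. apply ded_step. apply ded_base.
    right. exists theta, [cT]. split; [simpl; tauto|]. split.
    + intros [|[|i]]; simpl; auto. discriminate.
    + split; [|reflexivity]. constructor; [|constructor]. split.
      * intros i; reflexivity.
      * intros s Hs. simpl in Hs. destruct Hs as [Hs|[]].
        exists [(false, AEq cT tzero)]. split.
        -- exists (FNot all_theta_xx). split; [right; reflexivity|].
           vm_compute. right; left; reflexivity.
        -- exists (false, AEq cT tzero). split; [left; reflexivity|].
           simpl. left. left. exact Hs.
  - apply ded_step; auto. left; auto.
Qed.

Lemma C0_in A c : T_neg_theta A -> In c (CNF (skE A)) -> C0 c.
Proof. intros; exists A; auto. Qed.

Lemma incons : inconsistent C1.
Proof.
  intros M HM.
  set (z := fint M FZero []).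
  set (sc := fun a => fint M FSucc [a]).
  set (pr := fun a => fint M FPred [a]).
  set (pl := fun a b => fint M FPlus [a; b]).
  set (cv := teval M (fun _ => dom_inh M) cT).
  set (dv := teval M (fun _ => dom_inh M) dT).
  assert (Hax : forall A c, In A T_axioms -> In c (CNF (skE A)) ->
     forall rho, csat M rho c).
  { intros A c HA Hc rho. apply clause_csat. apply HM. left. exists A; split; auto. left; auto. }
  assert (H3 : forall a, pr (sc a) = a).
  { intros a. specialize (Hax (nth 2 T_axioms FTrue) _ (ltac:(simpl; tauto)) (ltac:(vm_compute; left; reflexivity)) (fun _ => a)).
    simpl in Hax. destruct Hax as [H|[]]. exact H. }
  assert (H4 : forall a, pl a z = a).
  { intros a. specialize (Hax (nth 3 T_axioms FTrue) _ (ltac:(simpl; tauto)) (ltac:(vm_compute; left; reflexivity)) (fun _ => a)).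
    simpl in Hax. destruct Hax as [H|[]]. exact H. }
  assert (H5 : forall a b, pl a (sc b) = sc (pl a b)).
  { intros a b. specialize (Hax (nth 4 T_axioms FTrue) _ (ltac:(simpl; tauto)) (ltac:(vm_compute; left; reflexivity))
      (fun i => match i with 0 => b | _ => a end)).
    simpl in Hax. destruct Hax as [H|[]]. exact H. }
  assert (Hneg : forall c, In c (CNF (skE (FNot all_theta_xx))) -> forall rho, csat M rho c).
  { intros c Hc rho. apply clause_csat. apply HM. left. exists (FNot all_theta_xx); split; auto. right; auto. }
  assert (Hc1 : pl cv cv = cv).
  { specialize (Hneg _ (ltac:(vm_compute; left; reflexivity)) (fun _ => dom_inh M)). simpl in Hneg.
    destruct Hneg as [H|[]]. exact H. }
  assert (Hc2 : cv <> z).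
  { specialize (Hneg _ (ltac:(vm_compute; right; left; reflexivity)) (fun _ => dom_inh M)). simpl in Hneg.
    destruct Hneg as [H|[]]. exact H. }
  assert (HI : forall c, In c BI' -> csat M (fun _ => cv) c).
  { intros c Hc. apply clause_csat. apply HM. right. rewrite BI_eq. exact Hc. }
  assert (Ec : teval M (fun _ => cv) cT = cv) by reflexivity.
  assert (Ed : teval M (fun _ => cv) dT = dv) by reflexivity.
  pose proof (HI _ (or_introl eq_refl)) as K1.
  pose proof (HI _ (or_intror (or_introl eq_refl))) as K2.
  pose proof (HI _ (or_intror (or_intror (or_introl eq_refl)))) as K3.
  cbn [csat lit_sat fst snd aeval teval map tplus tsucc tzero app] in K1, K2, K3.
  rewrite ?Ec, ?Ed in K1, K2, K3.
  fold z in K1, K2, K3. fold (sc dv) in K1, K2, K3.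
  fold (pl cv z) (pl cv dv) (pl cv (sc dv)) (pl cv cv) in K1, K2, K3.
  pose proof (H4 cv) as E1. pose proof (H5 cv dv) as E2.
  pose proof (H3 (pl cv dv)) as E3. pose proof (H3 dv) as E4.
  change (teval M (fun _ => cv) dT) with dv in K1, K2. unfold z, sc, pr, pl in *. intuition congruence.
Qed.

Theorem lemma9 (S : sat_system) :
  sound S -> refut_complete S ->
  refutes (sys_plus S (IND_R_PF Open_T)) (CNF_sk_set T_neg_theta).
Proof.
  intros _ Hc. destruct (Hc C1 incons) as [D [HD HE]].
  exists D. split; auto. apply lift. exact HD.
Qed.
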